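(* Let $A=[a_{ij}]\in\mathcal{M}_3(\mathbb{H})$ be strictly upper triangular and suppose that the two quaternions $a_{12}$ and $a_{13}a_{23}^*$ are linearly independent over $\mathbb{R}$. Let $M=\max\{\pi_{\mathbb{R}}(\mathbf{x}^*A\mathbf{x}):\mathbf{x}\in\mathbb{S}_{\mathbb{H}^3}\}$ and let $\mathbf{y}=(y_1,y_2,y_3)\in\mathbb{S}_{\mathbb{H}^3}$ satisfy $\pi_{\mathbb{R}}(\mathbf{y}^*A\mathbf{y})=M$. Then $$y_1^*(a_{12}y_2+a_{13}y_3),\quad y_2^*(a_{12}^*y_1+a_{23}y_3),\quad (y_1^*a_{13}+y_2^*a_{23})y_3$$ all belong to $\mathbb{R}\setminus\{0\}$.
   Context: $\mathbb{H}$ denotes the real quaternions with conjugation $q\mapsto q^*$; for $q=a_0+a_1i+a_2j+a_3k$, $\pi_{\mathbb{R}}(q)=a_0$ is its real part. $\mathbb{S}_{\mathbb{H}^3}=\{\mathbf{x}\in\mathbb{H}^3:\mathbf{x}^*\mathbf{x}=1\}$, where $\mathbf{x}^*$ is the conjugate transpose. *)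

(* Defs.v *)
From Stdlib Require Import Reals Lra Lia Psatz.
Open Scope R_scope.

(* H = { a0 + a1 i + a2 j + a3 k } *)
Record quat : Type := Quat { q0 : R; q1 : R; q2 : R; q3 : R }.

Definition qzero : quat := Quat 0 0 0 0.
Definition qone  : quat := Quat 1 0 0 0.
Definition qadd (p q : quat) : quat :=
  Quat (q0 p + q0 q) (q1 p + q1 q) (q2 p + q2 q) (q3 p + q3 q).
Definition qmul (p q : quat) : quat :=
  Quat (q0 p * q0 q - q1 p * q1 q - q2 p * q2 q - q3 p * q3 q)
       (q0 p * q1 q + q1 p * q0 q + q2 p * q3 q - q3 p * q2 q)
       (q0 p * q2 q - q1 p * q3 q + q2 p * q0 q + q3 p * q1 q)
       (q0 p * q3 q + q1 p * q2 q - q2 p * q1 q + q3 p * q0 q).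
Definition qconj (q : quat) : quat := Quat (q0 q) (- q1 q) (- q2 q) (- q3 q).
Definition qscale (r : R) (q : quat) : quat :=
  Quat (r * q0 q) (r * q1 q) (r * q2 q) (r * q3 q).
Definition piR (q : quat) : R := q0 q.

Definition real_nonzero (q : quat) : Prop :=
  q1 q = 0 /\ q2 q = 0 /\ q3 q = 0 /\ q0 q <> 0.

Definition lin_indep_R (p q : quat) : Prop :=
  forall a b : R, qadd (qscale a p) (qscale b q) = qzero -> a = 0 /\ b = 0.

(* Vectors in H^3 and 3x3 matrices over H, indices 0,1,2 *)
Definition qsum3 (f : nat -> quat) : quat := qadd (qadd (f 0%nat) (f 1%nat)) (f 2%nat).

Definition qnorm2 (x : nat -> quat) : quat := qsum3 (fun i => qmul (qconj (x i)) (x i)).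

Definition in_sphere3 (x : nat -> quat) : Prop := qnorm2 x = qone.

Definition qform (A : nat -> nat -> quat) (x : nat -> quat) : quat :=
  qsum3 (fun i => qsum3 (fun j => qmul (qmul (qconj (x i)) (A i j)) (x j))).

Definition strictly_upper3 (A : nat -> nat -> quat) : Prop :=
  forall i j : nat, (i < 3)%nat -> (j < 3)%nat -> (j <= i)%nat -> A i j = qzero.

(* Main.v *)
Require Import Defs.
From Stdlib Require Import Reals Lra Lia Psatz.
Open Scope R_scope.

Lemma quat_eq p q : q0 p = q0 q -> q1 p = q1 q -> q2 p = q2 q -> q3 p = q3 q -> p = q.
Proof. destruct p, q; simpl; intros; subst; reflexivity. Qed.

Definition qn (p : quat) : R := q0 p * q0 p + q1 p * q1 p + q2 p * q2 p + q3 p * q3 p.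
Definition nn (u v w : quat) : R := qn u + qn v + qn w.
Definition fq (a b c u v w : quat) : R :=
  piR (qadd (qadd (qmul (qmul (qconj u) a) v) (qmul (qmul (qconj u) b) w)) (qmul (qmul (qconj v) c) w)).
Definition dt (p s : quat) : R := piR (qmul (qconj p) s).
Definition res0 (a b c : quat) M (u v w : quat) :=
  qadd (qscale (2*M) u) (qscale (-1) (qadd (qmul a v) (qmul b w))).
Definition res1 (a b c : quat) M (u v w : quat) :=
  qadd (qscale (2*M) v) (qscale (-1) (qadd (qmul (qconj a) u) (qmul c w))).
Definition res2 (a b c : quat) M (u v w : quat) :=
  qadd (qscale (2*M) w) (qscale (-1) (qadd (qmul (qconj b) u) (qmul (qconj c) v))).

Ltac qdes := repeat match goal with q : quat |- _ =>
  let a0 := fresh "r" in let a1 := fresh "r" in let a2 := fresh "r" in let a3 := fresh "r" in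
  destruct q as [a0 a1 a2 a3] end.
Ltac unf := cbv beta iota zeta delta [fq nn dt res0 res1 res2 qn qmul qadd qscale qconj piR qzero qone q0 q1 q2 q3] in *.
Ltac qring := intros; qdes; apply quat_eq; unf; ring.
Ltac rring := intros; qdes; unf; ring.

Lemma qn_ge0 p : 0 <= qn p.
Proof. unfold qn; nra. Qed.

Lemma qn_zero p : qn p = 0 -> p = qzero.
Proof.
  destruct p as [x0 x1 x2 x3]; unfold qn; cbn; intro H.
  assert (x0 * x0 = 0) by nra. assert (x1 * x1 = 0) by nra.
  assert (x2 * x2 = 0) by nra. assert (x3 * x3 = 0) by nra.
  apply quat_eq; cbn; nra.
Qed.

Lemma qn_mul p q : qn (qmul p q) = qn p * qn q.
Proof. rring. Qed.
Lemma qn_scale k p : qn (qscale k p) = k * k * qn p.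
Proof. rring. Qed.

Lemma form_eq A x : strictly_upper3 A ->
  piR (qform A x) = fq (A 0%nat 1%nat) (A 0%nat 2%nat) (A 1%nat 2%nat) (x 0%nat) (x 1%nat) (x 2%nat).
Proof.
  intro H. unfold qform, qsum3.
  rewrite (H 0%nat 0%nat), (H 1%nat 0%nat), (H 1%nat 1%nat), (H 2%nat 0%nat), (H 2%nat 1%nat), (H 2%nat 2%nat) by lia.
  generalize (A 0%nat 1%nat) (A 0%nat 2%nat) (A 1%nat 2%nat) (x 0%nat) (x 1%nat) (x 2%nat).
  clear H. rring.
Qed.

Lemma sphere_eq x : in_sphere3 x <-> nn (x 0%nat) (x 1%nat) (x 2%nat) = 1.
Proof.
  unfold in_sphere3, qnorm2, qsum3.
  assert (E : forall u v w, qadd (qadd (qmul (qconj u) u) (qmul (qconj v) v)) (qmul (qconj w) w)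
     = Quat (nn u v w) 0 0 0) by qring.
  rewrite E. split; intro H.
  - inversion H; reflexivity.
  - rewrite H; reflexivity.
Qed.

Lemma pert a b c u v w p q r M t :
  M * nn (qadd u (qscale t p)) (qadd v (qscale t q)) (qadd w (qscale t r))
  - fq a b c (qadd u (qscale t p)) (qadd v (qscale t q)) (qadd w (qscale t r))
  = (M * nn u v w - fq a b c u v w)
    + t * (dt p (res0 a b c M u v w) + dt q (res1 a b c M u v w) + dt r (res2 a b c M u v w))
    + t * t * (M * nn p q r - fq a b c p q r).
Proof. rring. Qed.

Lemma linear0 L K : (forall t, 0 <= t * L + t * t * K) -> L = 0.
Proof.
  intro H. destruct (Req_dec L 0) as [|HL]; auto. exfalso.
  set (k := Rabs K + 1).
  assert (Hk : 0 < k) by (unfold k; pose proof (Rabs_pos K); lra).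
  assert (HKk : K <= k) by (unfold k; pose proof (Rle_abs K); lra).
  set (t := - L / (2 * k)).
  assert (Ht : t * k = - L / 2) by (unfold t; field; lra).
  specialize (H t).
  assert (t * t * K <= t * t * k) by (apply Rmult_le_compat_l; nra).
  assert (0 < L * L) by (apply Rsqr_pos_lt in HL; unfold Rsqr in HL; lra).
  assert (t * L * k < 0) by nra.
  nra.
Qed.

Lemma qmul0r x : qmul x qzero = qzero. Proof. qring. Qed.
Lemma qmul0l x : qmul qzero x = qzero. Proof. qring. Qed.
Lemma qadd0l x : qadd qzero x = x. Proof. qring. Qed.
Lemma qadd0r x : qadd x qzero = x. Proof. qring. Qed.
Lemma qscale0 k : qscale k qzero = qzero. Proof. qring. Qed.
Lemma qconj0 : qconj qzero = qzero. Proof. qring. Qed.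
Lemma qn0 : qn qzero = 0. Proof. rring. Qed.
Lemma qn_conj p : qn (qconj p) = qn p. Proof. rring. Qed.
Lemma dt_self p : dt p p = qn p. Proof. rring. Qed.
Lemma Lgen x y z k : qadd (qmul x (qscale k y)) (qscale k z) = qscale k (qadd (qmul x y) z).
Proof. qring. Qed.
Lemma L_u a b c w k : qmul (qadd (qmul a c) (qscale k b)) w = qadd (qmul a (qmul c w)) (qscale k (qmul b w)).
Proof. qring. Qed.
Lemma L_v a b c w k : qmul (qadd (qmul (qconj a) b) (qscale k c)) w = qadd (qmul (qconj a) (qmul b w)) (qscale k (qmul c w)).
Proof. qring. Qed.
Lemma L_w a b c v k : qmul (qadd (qmul (qconj b) a) (qscale k (qconj c))) v = qadd (qmul (qconj b) (qmul a v)) (qscale k (qmul (qconj c) v)).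
Proof. qring. Qed.
Lemma F_u a b c k : qmul (qadd (qmul a c) (qscale k b)) (qconj c) = qadd (qscale (qn c) a) (qscale k (qmul b (qconj c))).
Proof. qring. Qed.
Lemma F_v a b c k : qmul b (qconj (qadd (qmul (qconj a) b) (qscale k c))) = qadd (qscale (qn b) a) (qscale k (qmul b (qconj c))).
Proof. qring. Qed.
Lemma F_w a b c k : qmul b (qadd (qmul (qconj b) a) (qscale k (qconj c))) = qadd (qscale (qn b) a) (qscale k (qmul b (qconj c))).
Proof. qring. Qed.
Lemma Rq1 u k : qmul (qconj u) (qscale k u) = Quat (k * qn u) 0 0 0. Proof. qring. Qed.
Lemma R3a u v b c : qadd (qmul (qconj u) b) (qmul (qconj v) c) = qconj (qadd (qmul (qconj b) u) (qmul (qconj c) v)).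
Proof. qring. Qed.
Lemma R3b w k : qmul (qconj (qscale k w)) w = Quat (k * qn w) 0 0 0. Proof. qring. Qed.
Lemma rnz x : x <> 0 -> real_nonzero (Quat x 0 0 0).
Proof. unfold real_nonzero; simpl; auto. Qed.
Lemma cancel_aux P w : qmul (qmul P w) (qconj w) = qscale (qn w) P. Proof. qring. Qed.
Lemma qcancel P w : qmul P w = qzero -> qn w <> 0 -> P = qzero.
Proof.
  intros H Hw. pose proof (cancel_aux P w) as E. rewrite H, qmul0l in E.
  destruct P as [p0 p1 p2 p3]. unfold qscale in E; simpl in E. injection E; intros.
  apply quat_eq; simpl.
  all: match goal with H : 0 = _ * ?x |- ?x = 0 => destruct (Rmult_integral _ _ (eq_sym H)); [contradiction|assumption] end.
Qed.
Lemma res_eq k x Y : qadd (qscale k x) (qscale (-1) Y) = qzero -> Y = qscale k x.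
Proof. intro H. destruct x, Y. unfold qadd, qscale, qzero in *; simpl in *. injection H; intros. apply quat_eq; simpl; lra. Qed.
Lemma fq_one a b c : fq a b c qone (qconj a) qzero = qn a. Proof. rring. Qed.
Lemma nn_one a : nn qone (qconj a) qzero = 1 + qn a. Proof. rring. Qed.
Lemma nn_scale s u v w : nn (qscale s u) (qscale s v) (qscale s w) = s * s * nn u v w. Proof. rring. Qed.
Lemma fq_scale a b c s u v w : fq a b c (qscale s u) (qscale s v) (qscale s w) = s * s * fq a b c u v w. Proof. rring. Qed.
Lemma fq_zero a b c : fq a b c qzero qzero qzero = 0. Proof. rring. Qed.
Lemma lin_zero X : qadd (qscale 1 qzero) (qscale 0 X) = qzero. Proof. qring. Qed.

Lemma bound a b c M : (forall u v w, nn u v w = 1 -> fq a b c u v w <= M) ->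
  forall u v w, fq a b c u v w <= M * nn u v w.
Proof.
  intros H u v w.
  pose proof (qn_ge0 u); pose proof (qn_ge0 v); pose proof (qn_ge0 w).
  destruct (Req_dec (nn u v w) 0) as [Z|Z].
  - unfold nn in Z.
    assert (Zu : u = qzero) by (apply qn_zero; lra).
    assert (Zv : v = qzero) by (apply qn_zero; lra).
    assert (Zw : w = qzero) by (apply qn_zero; lra).
    subst. rewrite fq_zero. unfold nn; rewrite qn0. lra.
  - assert (Hp : 0 < nn u v w) by (unfold nn in *; lra).
    set (s := / sqrt (nn u v w)).
    assert (Hs : s * s * nn u v w = 1).
    { unfold s. pose proof (sqrt_lt_R0 _ Hp). rewrite <- (sqrt_sqrt (nn u v w)) at 3 by lra. field; lra. }
    specialize (H (qscale s u) (qscale s v) (qscale s w)).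
    rewrite nn_scale, fq_scale in H. specialize (H Hs).
    replace (fq a b c u v w) with (nn u v w * (s * s * fq a b c u v w)) by (transitivity ((s*s*nn u v w) * fq a b c u v w); [ring | rewrite Hs; ring]).
    rewrite Rmult_comm. apply Rmult_le_compat_r; lra.
Qed.

Lemma core a b c u v w M :
  lin_indep_R a (qmul b (qconj c)) -> nn u v w = 1 -> fq a b c u v w = M ->
  (forall p q r, fq a b c p q r <= M * nn p q r) ->
  real_nonzero (qmul (qconj u) (qadd (qmul a v) (qmul b w))) /\
  real_nonzero (qmul (qconj v) (qadd (qmul (qconj a) u) (qmul c w))) /\
  real_nonzero (qmul (qadd (qmul (qconj u) b) (qmul (qconj v) c)) w).
Proof.
  intros Hli Hn HM Hb.
  assert (Ha : qn a <> 0).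
  { intro Z. apply qn_zero in Z. subst a.
    destruct (Hli 1 0) as [H1 _]; [apply lin_zero | lra]. }
  assert (HMpos : 0 < M).
  { pose proof (Hb qone (qconj a) qzero) as H. rewrite fq_one, nn_one in H.
    pose proof (qn_ge0 a). destruct (Rle_lt_dec M 0); [|assumption].
    assert (M * (1 + qn a) <= 0) by nra. lra. }
  set (p := res0 a b c M u v w). set (q := res1 a b c M u v w). set (r := res2 a b c M u v w).
  assert (Hlin : forall t, 0 <= t * nn p q r + t * t * (M * nn p q r - fq a b c p q r)).
  { intro t. pose proof (pert a b c u v w p q r M t) as E.
    rewrite !dt_self, Hn, HM in E. fold p q r in E.
    pose proof (Hb (qadd u (qscale t p)) (qadd v (qscale t q)) (qadd w (qscale t r))).
    replace (qn p + qn q + qn r) with (nn p q r) in E by reflexivity. lra. }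
  apply linear0 in Hlin. unfold nn in Hlin.
  pose proof (qn_ge0 p); pose proof (qn_ge0 q); pose proof (qn_ge0 r).
  assert (Zp : p = qzero) by (apply qn_zero; lra).
  assert (Zq : q = qzero) by (apply qn_zero; lra).
  assert (Zr : r = qzero) by (apply qn_zero; lra).
  apply res_eq in Zp. apply res_eq in Zq. apply res_eq in Zr.
  clear p q r Hlin H H0 H1.
  set (k := 2 * M) in *.
  assert (Hk : k <> 0) by (unfold k; lra).
  pose proof (qn_ge0 u) as Gu; pose proof (qn_ge0 v) as Gv; pose proof (qn_ge0 w) as Gw.
  assert (Hkk : 0 < k * k) by nra.
  assert (Nu : qn u <> 0).
  { intro Z. apply qn_zero in Z. subst u.
    rewrite qmul0r, qadd0l in Zq. rewrite qmul0r, qadd0l in Zr. rewrite qscale0 in Zp.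
    unfold nn in Hn; rewrite qn0 in Hn.
    pose proof (f_equal qn Zq) as N1. pose proof (f_equal qn Zr) as N2.
    rewrite qn_mul, qn_scale in N1, N2. rewrite qn_conj in N2.
    assert (Nw : qn w <> 0).
    { intro Z. rewrite Z in N1. assert (qn v = 0) by nra. lra. }
    assert (P0 : qadd (qmul a c) (qscale k b) = qzero).
    { apply (qcancel _ w); [|exact Nw].
      rewrite L_u, Zq, Lgen, Zp, qscale0. reflexivity. }
    pose proof (F_u a b c k) as F. rewrite P0, qmul0l in F.
    destruct (Hli (qn c) k) as [_ Hk0]; [symmetry; exact F | contradiction]. }
  assert (Nv : qn v <> 0).
  { intro Z. apply qn_zero in Z. subst v.
    rewrite qmul0r, qadd0l in Zp. rewrite qmul0r, qadd0r in Zr. rewrite qscale0 in Zq.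
    unfold nn in Hn; rewrite qn0 in Hn.
    pose proof (f_equal qn Zp) as N1. pose proof (f_equal qn Zr) as N2.
    rewrite qn_mul, qn_scale in N1, N2. rewrite qn_conj in N2.
    assert (Nw : qn w <> 0).
    { intro Z. rewrite Z in N1. assert (qn u = 0) by nra. lra. }
    assert (P0 : qadd (qmul (qconj a) b) (qscale k c) = qzero).
    { apply (qcancel _ w); [|exact Nw].
      rewrite L_v, Zp, Lgen, Zq, qscale0. reflexivity. }
    pose proof (F_v a b c k) as F. rewrite P0, qconj0, qmul0r in F.
    destruct (Hli (qn b) k) as [_ Hk0]; [symmetry; exact F | contradiction]. }
  assert (Nw : qn w <> 0).
  { intro Z. apply qn_zero in Z. subst w.
    rewrite qmul0r, qadd0r in Zp. rewrite qmul0r, qadd0r in Zq. rewrite qscale0 in Zr.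
    unfold nn in Hn; rewrite qn0 in Hn.
    pose proof (f_equal qn Zp) as N1. pose proof (f_equal qn Zq) as N2.
    rewrite qn_mul, qn_scale in N1, N2. rewrite qn_conj in N2.
    assert (Nv' : qn v <> 0).
    { intro Z. rewrite Z in N1. assert (qn u = 0) by nra. lra. }
    assert (P0 : qadd (qmul (qconj b) a) (qscale k (qconj c)) = qzero).
    { apply (qcancel _ v); [|exact Nv'].
      rewrite L_w, Zp, Lgen, Zr, qscale0. reflexivity. }
    pose proof (F_w a b c k) as F. rewrite P0, qmul0r in F.
    destruct (Hli (qn b) k) as [_ Hk0]; [symmetry; exact F | contradiction]. }
  split; [|split].
  - rewrite Zp, Rq1. apply rnz. intro Z. apply Rmult_integral in Z. tauto.
  - rewrite Zq, Rq1. apply rnz. intro Z. apply Rmult_integral in Z. tauto.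
  - rewrite R3a, Zr, R3b. apply rnz. intro Z. apply Rmult_integral in Z. tauto.
Qed.

Theorem lemma5p2 (A : nat -> nat -> quat) (y : nat -> quat) :
  strictly_upper3 A ->
  lin_indep_R (A 0%nat 1%nat) (qmul (A 0%nat 2%nat) (qconj (A 1%nat 2%nat))) ->
  in_sphere3 y ->
  (forall x : nat -> quat, in_sphere3 x -> piR (qform A x) <= piR (qform A y)) ->
  real_nonzero (qmul (qconj (y 0%nat))
                     (qadd (qmul (A 0%nat 1%nat) (y 1%nat)) (qmul (A 0%nat 2%nat) (y 2%nat)))) /\
  real_nonzero (qmul (qconj (y 1%nat))
                     (qadd (qmul (qconj (A 0%nat 1%nat)) (y 0%nat)) (qmul (A 1%nat 2%nat) (y 2%nat)))) /\
  real_nonzero (qmul (qadd (qmul (qconj (y 0%nat)) (A 0%nat 2%nat))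
                           (qmul (qconj (y 1%nat)) (A 1%nat 2%nat)))
                     (y 2%nat)).
Proof.
  intros Hup Hli Hy Hmax.
  set (M := piR (qform A y)).
  assert (Hb : forall u v w, nn u v w = 1 ->
            fq (A 0%nat 1%nat) (A 0%nat 2%nat) (A 1%nat 2%nat) u v w <= M).
  { intros u v w H.
    pose (x := fun i : nat => match i with 0%nat => u | 1%nat => v | _ => w end).
    specialize (Hmax x). rewrite (form_eq A x Hup) in Hmax. apply Hmax.
    apply sphere_eq. exact H. }
  apply core with (M := M).
  - exact Hli.
  - apply sphere_eq; exact Hy.
  - unfold M. symmetry. apply form_eq; exact Hup.
  - apply bound; exact Hb.
Qed.
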